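(* Let $(X,\Sigma)$ be a test space with $X$ finite, and let $\mathrm{Pl}:E(X,\Sigma)\to D$ be a plausibility measure on it. Then the following are equivalent: (a) $\mathrm{Pl}$ agrees with some probability measure $\mu$ on $(X,\Sigma)$, meaning that for all events $A,B$ we have $\mathrm{Pl}(A)\preceq\mathrm{Pl}(B)$ if and only if $\mu(A)\le\mu(B)$; (b) the image of $\mathrm{Pl}$ is totally ordered by $\preceq$ and $\mathrm{Pl}$ is Archimedean.
   Context: A test space $(X,\Sigma)$ is a set $X$ of outcomes together with a set $\Sigma\subseteq 2^X$ of subsets (called tests) with $\bigcup_{T\in\Sigma}T=X$. An event is a subset of $X$ that is contained in some test, and $E(X,\Sigma)$ denotes the set of all events. A probability measure on $(X,\Sigma)$ is a function $\mu:X\to\mathbb{R}_{\ge0}$ with $\sum_{x\in T}\mu(x)=1$ for every $T\in\Sigma$. It is extended to events by $\mu(A)=\sum_{x\in A}\mu(x)$. A plausibility measure is a function $\mathrm{Pl}:E(X,\Sigma)\to D$, where $(D,\preceq)$ is a partially ordered set, satisfying three conditions: (i) $\mathrm{Pl}(T)=\mathrm{Pl}(R)$ for all $T,R\in\Sigma$; (ii) $A\subseteq B$ implies $\mathrm{Pl}(A)\preceq\mathrm{Pl}(B)$; (iii) $\mathrm{Pl}(\emptyset)\prec\mathrm{Pl}(T)$ for every $T\in\Sigma$. Here $a\prec b$ means $a\preceq b$ and $b\not\preceq a$. $\mathrm{Pl}$ is Archimedean if the following holds for every $n\ge1$ and every pair of finite families of events $(A_1,\dots,A_n)$ and $(B_1,\dots,B_n)$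 such that each outcome $x\in X$ belongs to the same number of the $A_i$ as of the $B_i$ (counted with multiplicity): whenever $\mathrm{Pl}(A_i)\preceq\mathrm{Pl}(B_i)$ for all $i=1,\dots,n-1$, then $\mathrm{Pl}(A_n)\succeq\mathrm{Pl}(B_n)$. *)

(* Defs.v *)
From HB Require Import structures.
From mathcomp Require Import all_boot all_order all_algebra.
Set Implicit Arguments. Unset Strict Implicit. Unset Printing Implicit Defensive.
Import Order.TTheory GRing.Theory Num.Theory.

Definition test_space (X : finType) (Sigma : {set {set X}}) : Prop :=
  \bigcup_(T in Sigma) T = [set: X].

Definition event (X : finType) (Sigma : {set {set X}}) (A : {set X}) : Prop :=
  exists2 T, T \in Sigma & A \subset T.

Definition prob_measure (R : realFieldType) (X : finType)
    (Sigma : {set {set X}}) (mu : X -> R) : Prop :=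
  (forall x, (0 <= mu x)%R) /\
  (forall T, T \in Sigma -> (\sum_(x in T) mu x)%R = 1%R).

Definition measure_of (R : realFieldType) (X : finType) (mu : X -> R)
    (A : {set X}) : R := (\sum_(x in A) mu x)%R.

(* Plausibility measure Pl : E(X,Sigma) -> D, D a partially ordered set.
   Pl is given as a total function on {set X}; only its values on events
   matter (all conditions quantify over events only). *)
Definition plausibility (disp : Order.disp_t) (D : porderType disp)
    (X : finType) (Sigma : {set {set X}}) (Pl : {set X} -> D) : Prop :=
  (forall T R, T \in Sigma -> R \in Sigma -> Pl T = Pl R) /\
  (forall A B, event Sigma A -> event Sigma B -> A \subset B ->
     (Pl A <= Pl B)%O) /\
  (forall T, T \in Sigma -> (Pl set0 < Pl T)%O).

Definition agrees (disp : Order.disp_t) (D : porderType disp)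
    (R : realFieldType) (X : finType) (Sigma : {set {set X}})
    (Pl : {set X} -> D) (mu : X -> R) : Prop :=
  forall A B, event Sigma A -> event Sigma B ->
    ((Pl A <= Pl B)%O <-> (measure_of mu A <= measure_of mu B)%R).

Definition image_total (disp : Order.disp_t) (D : porderType disp)
    (X : finType) (Sigma : {set {set X}}) (Pl : {set X} -> D) : Prop :=
  forall A B, event Sigma A -> event Sigma B ->
    (Pl A <= Pl B)%O \/ (Pl B <= Pl A)%O.

Definition archimedean (disp : Order.disp_t) (D : porderType disp)
    (X : finType) (Sigma : {set {set X}}) (Pl : {set X} -> D) : Prop :=
  forall (n : nat) (A B : 'I_n.+1 -> {set X}),
    (forall i, event Sigma (A i)) -> (forall i, event Sigma (B i)) ->
    (forall x : X, #|[set i | x \in A i]| = #|[set i | x \in B i]|) ->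
    (forall i : 'I_n.+1, i != ord_max -> (Pl (A i) <= Pl (B i))%O) ->
    (Pl (B ord_max) <= Pl (A ord_max))%O.

(* Main.v *)
Require Import Defs.
From HB Require Import structures.
From mathcomp Require Import all_boot all_order all_algebra.
From mathcomp Require Import ring lra zify.
Set Implicit Arguments. Unset Strict Implicit. Unset Printing Implicit Defensive.
Import Order.TTheory GRing.Theory Num.Theory.
Local Open Scope ring_scope.

Section Bounds.
Variable R : realFieldType.
Definition lsat (a : R * bool) (t : R) := if a.2 then a.1 < t else a.1 <= t.

Lemma lsat_best (lo : seq (R * bool)) : lo != [::] ->
  exists2 b, b \in lo & forall t, lsat b t -> forall a, a \in lo -> lsat a t.
Proof.
elim: lo => // a lo IH _.
case: (eqVneq lo [::]) => [-> | /IH [b bin bP]].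
  exists a; first by rewrite mem_seq1.
  by move=> t Ht a'; rewrite mem_seq1 => /eqP ->.
case: (ltgtP a.1 b.1) => [ab|ba|ab].
- exists b; first by rewrite inE bin orbT.
  move=> t Ht a'; rewrite inE => /orP [/eqP -> | ]; last exact: bP.
  move: Ht; rewrite /lsat; case: (b.2); case: (a.2) => H; lra.
- exists a; first by rewrite inE eqxx.
  move=> t Ht a'; rewrite inE => /orP [/eqP -> // | ]; apply: bP.
  move: Ht; rewrite /lsat; case: (b.2); case: (a.2) => H; lra.
- case Ea: a.2.
  + exists a; first by rewrite inE eqxx.
    move=> t Ht a'; rewrite inE => /orP [/eqP -> // | ]; apply: bP.
    move: Ht; rewrite /lsat Ea ab; case: (b.2) => H; lra.
  + exists b; first by rewrite inE bin orbT.
    move=> t Ht a'; rewrite inE => /orP [/eqP -> | ]; last exact: bP.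
    move: Ht; rewrite /lsat Ea ab; case: (b.2) => H; lra.
Qed.

Definition usat (a : R * bool) (t : R) := if a.2 then t < a.1 else t <= a.1.

Lemma usat_best (up : seq (R * bool)) : up != [::] ->
  exists2 b, b \in up & forall t, usat b t -> forall a, a \in up -> usat a t.
Proof.
move=> ne.
have ne' : [seq (- c.1, c.2) | c <- up] != [::] by case: up ne.
case: (lsat_best ne') => b /mapP [c cin ->] cP.
exists c => // t Ht a ain.
have := cP (- t) _ (- a.1, a.2) (map_f (fun c => (- c.1, c.2)) ain).
move: Ht; rewrite /usat /lsat /= !ltrN2 !lerN2; case: (c.2); case: (a.2) => //= H; 
  by move/(_ H).
Qed.

Lemma choose_t (lo up : seq (R * bool)) :
  (forall a b, a \in lo -> b \in up ->
     if a.2 || b.2 then a.1 < b.1 else a.1 <= b.1) ->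
  exists t, (forall a, a \in lo -> lsat a t) /\ (forall b, b \in up -> usat b t).
Proof.
move=> H.
case: (eqVneq lo [::]) => [lo0 | /lsat_best [a ain aP]];
case: (eqVneq up [::]) => [up0 | /usat_best [b bin bP]].
- by exists 0; rewrite lo0 up0.
- exists (b.1 - 1); rewrite lo0; split => // b'; apply: bP.
  rewrite /usat; case: (b.2); lra.
- exists (a.1 + 1); rewrite up0; split => // a'; apply: aP.
  rewrite /lsat; case: (a.2); lra.
- have Hab := H a b ain bin.
  case: (ltrP a.1 b.1) => ab.
  + exists ((a.1 + b.1) / 2); split => [a' | b'].
    * apply: aP; rewrite /lsat; case: (a.2); lra.
    * apply: bP; rewrite /usat; case: (b.2); lra.
  + exists a.1; split => [a' | b'].
    * apply: aP; move: Hab; rewrite /lsat; case: (a.2); case: (b.2) => /= H'; lra.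
    * apply: bP; move: Hab; rewrite /usat; case: (a.2); case: (b.2) => /= H'; lra.
Qed.
End Bounds.

Section FM.
Variable X : finType.
Definition cstr := ({ffun X -> int} * bool)%type.

Inductive cone (cs : seq cstr) : cstr -> Prop :=
| coneB c : c \in cs -> cone cs c
| coneD c1 c2 : cone cs c1 -> cone cs c2 ->
    cone cs ([ffun x => c1.1 x + c2.1 x], c1.2 || c2.2)
| coneZ (k : int) c : 0 < k -> cone cs c -> cone cs ([ffun x => k * c.1 x], c.2).

Definition infeasible cs := exists c, [/\ cone cs c, c.2 & forall x, c.1 x = 0].

Lemma cone_mono cs cs' c : (forall c, c \in cs' -> cone cs c) -> cone cs' c -> cone cs c.
Proof.
move=> H; elim=> {c}.
- by move=> c /H.
- move=> c1 c2 _ H1 _ H2; exact: (@coneD cs c1 c2 H1 H2).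
- move=> k c kp _ Hc; exact: (@coneZ cs k c kp Hc).
Qed.

Definition comb (j : X) (p q : cstr) : cstr :=
  ([ffun x => (- q.1 j) * p.1 x + p.1 j * q.1 x], p.2 || q.2).

Definition elim_j (j : X) (cs : seq cstr) : seq cstr :=
  [seq c : cstr <- cs | c.1 j == 0] ++
  [seq comb j p q | p <- [seq c : cstr <- cs | 0 < c.1 j], q <- [seq c : cstr <- cs | c.1 j < 0]].

Lemma elim_cone j cs c : c \in elim_j j cs -> cone cs c.
Proof.
rewrite mem_cat => /orP [| /allpairsP [[p q] /=]].
  by rewrite mem_filter => /andP [_ ?]; apply: coneB.
rewrite !mem_filter => -[/andP [pp pin] /andP [qn qin] ->].
have -> : comb j p q = ([ffun x => [ffun x => (- q.1 j) * p.1 x] x +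
      [ffun x => p.1 j * q.1 x] x], p.2 || q.2).
  by congr pair; apply/ffunP => x; rewrite !ffunE.
apply: (@coneD cs ([ffun x => (- q.1 j) * p.1 x], p.2) ([ffun x => p.1 j * q.1 x], q.2)); apply: coneZ; rewrite ?oppr_gt0 //; exact: coneB.
Qed.

Variable R : realFieldType.
Definition dot (c : {ffun X -> int}) (w : X -> R) := \sum_x (c x)%:~R * w x.
Definition sat (w : X -> R) (c : cstr) :=
  if c.2 then 0 < dot c.1 w else 0 <= dot c.1 w.

Lemma FM n : forall (V : {set X}) (cs : seq cstr), #|V| = n ->
  (forall c x, c \in cs -> x \notin V -> c.1 x = 0) -> ~ infeasible cs ->
  exists w, forall c, c \in cs -> sat w c.
Proof.
elim: n => [|n IH] V cs cardV supp ninf.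
  exists (fun _ => 0) => c cin.
  have V0 : V = set0 by apply/eqP; rewrite -cards_eq0 cardV.
  rewrite /sat /dot big1 => [|x _]; last by rewrite mulr0.
  case E: c.2 => //; exfalso; apply: ninf; exists c; split => //.
    exact: coneB.
  by move=> x; apply: supp => //; rewrite V0 inE.
have [j jV] : exists j, j \in V.
  by apply/set0Pn; rewrite -cards_eq0 cardV.
have cardV' : #|V :\ j| = n by rewrite (cardsD1 j V) jV in cardV; case: cardV.
have [w wP] : exists w, forall c, c \in elim_j j cs -> sat w c.
  apply: (IH (V :\ j)) => //.
    move=> c x; rewrite in_setD1 negb_and negbK => cin /orP [/eqP -> | xV].
      move: cin; rewrite mem_cat => /orP [| /allpairsP [[p q] /=]].
        by rewrite mem_filter => /andP [/eqP].
      move=> [_ _ ->]; rewrite /= ffunE; ring.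
    move: cin; rewrite mem_cat => /orP [| /allpairsP [[p q] /=]].
      by rewrite mem_filter => /andP [_ cin]; apply: supp.
    rewrite !mem_filter => -[/andP [_ pin] /andP [_ qin] ->].
    by rewrite /= ffunE (supp p x) // (supp q x) //; ring.
  move=> [c [cc c2 c0]]; apply: ninf; exists c; split => //.
  exact: cone_mono (@elim_cone j cs) cc.
pose r (c : cstr) := \sum_(x | x != j) (c.1 x)%:~R * w x.
have dotE c t : dot c.1 (fun x => if x == j then t else w x) = r c + (c.1 j)%:~R * t.
  rewrite /dot (bigD1 j) //= eqxx addrC; congr (_ + _).
  by apply: eq_bigr => x /negbTE ->.
have dotw c : dot c.1 w = r c + (c.1 j)%:~R * w j.
  by rewrite /dot (bigD1 j) //= addrC.
pose pos := [seq c : cstr <- cs | 0 < c.1 j].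
pose neg := [seq c : cstr <- cs | c.1 j < 0].
pose lo := [seq (- r p / (p.1 j)%:~R, p.2) | p <- pos].
pose up := [seq (r q / (- q.1 j)%:~R, q.2) | q <- neg].
have [t [tlo tup]] : exists t, (forall a, a \in lo -> lsat a t) /\
     (forall b, b \in up -> usat b t).
  apply: choose_t => a b /mapP [p pin ->] /mapP [q qin ->] /=.
  move: pin qin; rewrite !mem_filter => /andP [pp pin] /andP [qn qin].
  have := wP (comb j p q).
  rewrite mem_cat (allpairs_f (comb j)) ?mem_filter ?pp ?qn ?pin ?qin ?orbT //.
  have rc : r (comb j p q) = (- q.1 j)%:~R * r p + (p.1 j)%:~R * r q.
    rewrite /r !mulr_sumr -big_split /=; apply: eq_bigr => x _.
    by rewrite ffunE intrD !intrM !mulrA mulrDl.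
  have cj : (comb j p q).1 j = 0 by rewrite /= ffunE; ring.
  move=> /(_ isT); rewrite /sat (dotw (comb j p q)) rc cj mul0r addr0 /=.
  have pp' : 0 < (p.1 j)%:~R :> R by rewrite ltr0z.
  have qn' : 0 < (- q.1 j)%:~R :> R by rewrite ltr0z oppr_gt0.
  set P := (p.1 j)%:~R in pp' *; set Q := (- q.1 j)%:~R in qn' *.
  have ep : r p = (r p / P) * P by rewrite divfK // gt_eqF.
  have eq' : r q = (r q / Q) * Q by rewrite divfK // gt_eqF.
  rewrite mulNr [in X in X -> _]ep [in X in X -> _]eq'.
  set u := r p / P; set v := r q / Q.
  have -> : Q * (u * P) + P * (v * Q) = (P * Q) * (u + v) by ring.
  have PQ : 0 < P * Q by rewrite mulr_gt0.
  case: (p.2 || q.2).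
    by rewrite pmulr_rgt0 // => H; lra.
  by rewrite pmulr_rge0 // => H; lra.
exists (fun x => if x == j then t else w x) => c cin.
rewrite /sat dotE.
case: (ltrgtP (c.1 j) 0) => cj.
- have := tup (r c / (- c.1 j)%:~R, c.2).
  rewrite map_f ?mem_filter ?cj ?cin // => /(_ isT).
  have Q0 : 0 < (- c.1 j)%:~R :> R by rewrite ltr0z oppr_gt0.
  rewrite /usat /=; set Q := (- c.1 j)%:~R in Q0 *.
  have eQ : (c.1 j)%:~R = - Q :> R by rewrite /Q intrN opprK.
  rewrite eQ; case: (c.2).
    by rewrite ltr_pdivlMr // => H; lra.
  by rewrite ler_pdivlMr // => H; lra.
- have := tlo (- r c / (c.1 j)%:~R, c.2).
  rewrite map_f ?mem_filter ?cj ?cin // => /(_ isT).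
  have P0 : 0 < (c.1 j)%:~R :> R by rewrite ltr0z.
  rewrite /lsat /=; set P := (c.1 j)%:~R in P0 *.
  case: (c.2).
    by rewrite ltr_pdivrMr // => H; rewrite mulrC in H; lra.
  rewrite ler_pdivrMr // => H.  rewrite mulrC in H; lra.
- have := wP c; rewrite /elim_j mem_cat mem_filter cj eqxx cin /= => /(_ isT).
  by rewrite /sat dotw cj !mul0r.
Qed.
End FM.

Section Main.
Variables (R : realFieldType) (X : finType) (Sigma : {set {set X}})
  (disp : Order.disp_t) (D : porderType disp) (Pl : {set X} -> D).

Definition evb (A : {set X}) := [exists T in Sigma, A \subset T].
Lemma evbP A : reflect (event Sigma A) (evb A).
Proof.
apply: (iffP existsP) => [[T /andP [TS AT]] | [T TS AT]]; first by exists T.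
by exists T; rewrite TS AT.
Qed.

Definition cond (p : {set X} * {set X}) := [&& evb p.1, evb p.2 & (Pl p.1 <= Pl p.2)%O].
Definition ind (A : {set X}) (x : X) : int := (nat_of_bool (x \in A))%:Z.
Definition vec (p : {set X} * {set X}) x := ind p.2 x - ind p.1 x.
Definition strictp (p : {set X} * {set X}) := ~~ (Pl p.2 <= Pl p.1)%O.
Definition mk (p : {set X} * {set X}) : cstr X := ([ffun x => vec p x], strictp p).
Definition cs : seq (cstr X) :=
  [seq mk p | p <- enum (@predT ({set X} * {set X})) & cond p].

Lemma mk_in p : cond p -> mk p \in cs.
Proof. by move=> cp; rewrite map_f // mem_filter cp mem_enum. Qed.

Lemma sum_rep n (l : seq ({set X} * {set X})) (F : _ -> int) :
  \sum_(p <- flatten (nseq n l)) F p = (\sum_(p <- l) F p) *+ n.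
Proof. by elim: n => [|n IH]; rewrite ?big_nil ?mulr0n //= big_cat IH mulrS. Qed.

Lemma all_rep n (l : seq ({set X} * {set X})) a :
  all a l -> all a (flatten (nseq n l)).
Proof. by move=> al; elim: n => //= n IH; rewrite all_cat al IH. Qed.

Lemma cone_rep c : cone cs c -> exists l : seq ({set X} * {set X}),
  [/\ all cond l, forall x, c.1 x = \sum_(p <- l) vec p x &
      c.2 -> has strictp l].
Proof.
elim=> {c}.
- move=> c /mapP [p]; rewrite mem_filter => /andP [cp _] ->.
  exists [:: p]; split => /=; first by rewrite cp.
    by move=> x; rewrite big_seq1 ffunE.
  by rewrite orbF.
- move=> c1 c2 _ [l1 [a1 e1 h1]] _ [l2 [a2 e2 h2]].
  exists (l1 ++ l2); split; first by rewrite all_cat a1 a2.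
    by move=> x; rewrite ffunE big_cat e1 e2.
  by rewrite has_cat /= => /orP [/h1 -> | /h2 ->] //; rewrite orbT.
- move=> [n|n] c //= n0 _ [l [a e h]].
  exists (flatten (nseq n l)); split; first exact: all_rep.
    by move=> x; rewrite ffunE sum_rep e pmulrn mulrC mulrzz.
  move/h; case: n n0 => // n _ /=; rewrite has_cat => -> //.
Qed.


Lemma card_ind (m : nat) (F : 'I_m -> {set X}) x :
  \sum_(i < m) ind (F i) x = #|[set i | x \in F i]|%:Z.
Proof.
rewrite -sum1dep_card -[RHS]intz sumMz [RHS]big_mkcond /=.
by apply: eq_bigr => i _; rewrite /ind; case: (x \in F i).
Qed.

Lemma no_inf : archimedean Sigma Pl -> ~ infeasible cs.
Proof.
move=> arch [c [cc c2 c0]].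
case: (cone_rep cc) => l [al el hl].
have [p0 p0l sp0] := hasP (hl c2).
set s := rcons (rem p0 l) p0.
have pls : perm_eq l s.
  by rewrite /s perm_sym perm_rcons perm_sym; exact: perm_to_rem.
have als : all cond s by rewrite -(perm_all _ pls).
have sum0 x : \sum_(p <- s) vec p x = 0 by rewrite -(perm_big _ pls) -el c0.
set m := size (rem p0 l).
have sz : size s = m.+1 by rewrite size_rcons.
pose A (i : 'I_m.+1) := (nth p0 s i).1.
pose B (i : 'I_m.+1) := (nth p0 s i).2.
have cnd (i : 'I_m.+1) : cond (nth p0 s i) by apply: (allP als); rewrite mem_nth // sz.
have lastE : nth p0 s (@ord_max m) = p0 by rewrite nth_rcons /= ltnn eqxx.
have H := arch m A B.
have : (Pl (B ord_max) <= Pl (A ord_max))%O.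
  apply: H.
  - by move=> i; apply/evbP; case/and3P: (cnd i).
  - by move=> i; apply/evbP; case/and3P: (cnd i).
  - move=> x.
    suff : (#|[set i | x \in B i]|%:Z = #|[set i | x \in A i]|%:Z) by case=> ->.
    rewrite -card_ind -card_ind; apply/eqP; rewrite -subr_eq0 -sumrB; apply/eqP.
    rewrite -[RHS](sum0 x) [RHS](big_nth p0) sz big_mkord.
    by apply: eq_bigr => i _.
  - by move=> i _; case/and3P: (cnd i).
by rewrite /A /B lastE; apply/negP.
Qed.

Lemma dot_mk p (w : X -> R) :
  dot (mk p).1 w = \sum_(x in p.2) w x - \sum_(x in p.1) w x.
Proof.
rewrite /dot; under eq_bigr do rewrite ffunE /vec intrB mulrBl.
rewrite sumrB; congr (_ - _); rewrite [RHS]big_mkcond; apply: eq_bigr => x _;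
  by rewrite /ind; case: (x \in _); rewrite ?mul1r ?mul0r.
Qed.

Lemma main_hard : test_space Sigma -> plausibility Sigma Pl ->
  image_total Sigma Pl -> archimedean Sigma Pl ->
  exists mu : X -> R, prob_measure Sigma mu /\ agrees Sigma Pl mu.
Proof.
move=> ts [plT [plM plS]] tot arch.
have supp : forall (c : cstr X) x, c \in cs -> x \notin [set: X] -> c.1 x = 0.
  by move=> c x _; rewrite inE.
have [w wP] := @FM X R _ setT cs erefl supp (no_inf arch).
pose ws (A : {set X}) := \sum_(x in A) w x.
have wsat A B : event Sigma A -> event Sigma B -> (Pl A <= Pl B)%O ->
    if strictp (A, B) then ws A < ws B else ws A <= ws B.
  move=> eA eB le.
  have cp : cond (A, B) by rewrite /cond /= le (introT (evbP A) eA) (introT (evbP B) eB).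
  have := wP _ (mk_in cp).
  by rewrite /sat /= dot_mk /=; case: (strictp _); rewrite ?subr_gt0 ?subr_ge0.
have wle A B : event Sigma A -> event Sigma B -> (Pl A <= Pl B)%O -> ws A <= ws B.
  move=> eA eB le; have := wsat A B eA eB le.
  by case: (strictp _) => // /ltW.
have wlt A B : event Sigma A -> event Sigma B -> (Pl A <= Pl B)%O ->
    ~~ (Pl B <= Pl A)%O -> ws A < ws B.
  by move=> eA eB le st; have := wsat A B eA eB le; rewrite /strictp /= st.
have ws0 : ws set0 = 0 by rewrite /ws big_set0.
have w0 x : 0 <= w x.
  have : x \in [set: X] by rewrite inE.
  rewrite -ts => /bigcupP [T TS xT].
  have e0 : event Sigma set0 by exists T; rewrite ?sub0set.
  have e1 : event Sigma [set x] by exists T; rewrite ?sub1set.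
  have := wle _ _ e0 e1 (plM _ _ e0 e1 (sub0set _)).
  by rewrite ws0 /ws big_set1.
case: (set_0Vmem Sigma) => [S0 | [T0 T0S]].
  exists w; split; first by split => // T; rewrite S0 inE.
  by move=> A B [T]; rewrite S0 inE.
have eT T : T \in Sigma -> event Sigma T by move=> TS; exists T.
have e0 : event Sigma set0 by exists T0; rewrite ?sub0set.
have c0 : 0 < ws T0.
  rewrite -ws0; apply: wlt => //; first exact: eT.
    by apply: ltW; apply: plS.
  by rewrite lt_geF // plS.
exists (fun x => w x / ws T0).
have mE A : measure_of (fun x => w x / ws T0) A = ws A / ws T0.
  by rewrite /measure_of /ws mulr_suml.
split; first split.
- by move=> x; rewrite divr_ge0 // ltW.
- move=> T TS; rewrite -/(measure_of _ T) mE.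
  have -> : ws T = ws T0.
    have l1 := wle T T0 (eT T TS) (eT T0 T0S) (ltac:(by rewrite (plT T T0 TS T0S))).
    have l2 := wle T0 T (eT T0 T0S) (eT T TS) (ltac:(by rewrite (plT T0 T T0S TS))).
    by apply/le_anti; rewrite l1 l2.

  by rewrite divff // gt_eqF.
- move=> A B eA eB; rewrite !mE ler_pM2r ?invr_gt0 //; split; first exact: wle.
  move=> le; apply/negPn/negP => nle.
  have := tot A B eA eB; rewrite (negbTE nle) /= => -[] // leBA.
  by have := wlt B A eB eA leBA nle; rewrite ltNge le.
Qed.

Lemma sum_meas (mu : X -> R) k (F : 'I_k -> {set X}) :
  \sum_i measure_of mu (F i) = \sum_x #|[set i | x \in F i]|%:R * mu x.
Proof.
under eq_bigr do rewrite /measure_of big_mkcond.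
rewrite exchange_big; apply: eq_bigr => x _.
rewrite -sum1dep_card natr_sum mulr_suml [RHS]big_mkcond; apply: eq_bigr => i _.
by case: (x \in F i); rewrite ?mul1r ?mul0r.
Qed.

Lemma main_easy :
  (exists mu : X -> R, prob_measure Sigma mu /\ agrees Sigma Pl mu) ->
  image_total Sigma Pl /\ archimedean Sigma Pl.
Proof.
move=> [mu [[mu0 mu1] ag]]; split.
  move=> A B eA eB; case: (lerP (measure_of mu A) (measure_of mu B)) => h.
    by left; apply/ag.
  by right; apply/ag => //; apply: ltW.
move=> n A B eA eB cnt le; apply/(ag _ _ (eB ord_max) (eA ord_max)).
have key : \sum_i measure_of mu (A i) = \sum_i measure_of mu (B i).
  by rewrite !sum_meas; apply: eq_bigr => x _; rewrite cnt.
have hs : \sum_(i | i != ord_max) measure_of mu (A i) <=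
          \sum_(i | i != ord_max) measure_of mu (B i).
  by apply: ler_sum => i ni; apply/ag => //; apply: le.
move: key; rewrite (bigD1 ord_max) //= [X in _ = X](bigD1 ord_max) //=.
move=> key; lra.
Qed.

End Main.


Unset Implicit Arguments.

Theorem theorem3 (R : realFieldType) (X : finType) (Sigma : {set {set X}})
    (disp : Order.disp_t) (D : porderType disp) (Pl : {set X} -> D) :
  test_space Sigma -> plausibility Sigma Pl ->
  ((exists mu : X -> R, prob_measure Sigma mu /\ agrees Sigma Pl mu) <->
   (image_total Sigma Pl /\ archimedean Sigma Pl)).
Proof.
move=> ts pl; split; first exact: main_easy.
by case=> tot arch; apply: main_hard.
Qed.
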